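(* In the setting of the context, at every stage $k\in\{0,\dots,K\}$ (and for every fixed sequence of observed values $f_1,\dots,f_k$) there exists a set $\{\alpha_k^i\}$ of row vectors $\alpha_k^i\in\mathbb{R}^{1\times L}$ such that $\bar{J}_k(\varpi)=\min_i[\alpha_k^i\varpi]$ for all $\varpi$ in the probability simplex, with $\{\alpha_K^i\}\triangleq\{Q_j^T\}_{j=1}^L$.
   Context: There are $L$ classes $c_1,\dots,c_L$ with class variable $\mathcal{C}$, and features $F_1,\dots,F_K$ with finitely many values, jointly distributed with $\mathcal{C}$. Let $e_k>0$ be feature evaluation costs, $Q_{ij}\geqslant 0$ misclassification costs, $Q_j=[Q_{1j},\dots,Q_{Lj}]^T$, and on the simplex $\Sigma=\{\varpi\in[0,1]^L:\sum_i\omega_i=1\}$ let $g(\varpi)=\min_{1\leqslant j\leqslant L}Q_j^T\varpi$. Let $\Delta(f_{k+1}\mid f_1,\dots,f_k)=[P(F_{k+1}=f_{k+1}\mid F_1=f_1,\dots,F_k=f_k,\mathcal{C}=c_i)]_{i=1}^L$. Define recursively $\bar{J}_K(\varpi)=g(\varpi)$ and, for $k=K-1,\dots,0$, $\bar{J}_k(\varpi)=\min[g(\varpi),\mathcal{A}_k(\varpi)]$, where $$\mathcal{A}_k(\varpi)=e_{k+1}+\sum_{f_{k+1}}\Delta^T(f_{k+1}\mid f_1,\dots,f_k)\varpi\;\bar{J}_{k+1}\!\left(\frac{\operatorname{diag}(\Delta(f_{k+1}\mid f_1,\dots,f_k))\varpi}{\Delta^T(f_{k+1}\mid f_1,\dots,f_k)\varpi}\right),$$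 the sum being over the possible values of $F_{k+1}$, $\bar{J}_{k+1}$ being the corresponding function for the history $f_1,\dots,f_{k+1}$, and a summand whose factor $\Delta^T\varpi$ equals $0$ taken to be $0$. *)

(* Defs.v *)
From HB Require Import structures.
From mathcomp Require Import all_boot all_order all_algebra.
Set Implicit Arguments. Unset Strict Implicit. Unset Printing Implicit Defensive.
Import Order.TTheory GRing.Theory Num.Theory.
Local Open Scope ring_scope.

(* Classes c_1..c_L are indexed by 'I_L; features F_1..F_K take values in a
   common finite type V; the joint law of (C, F_1, ..., F_K) is the pmf
   P : 'I_L -> K.-tuple V -> R.  Vectors varpi are column vectors 'cV_L,
   alpha's are row vectors 'rV_L, and Q is the L x L matrix (Q_ij). *)

(* minimum of a (nonempty) finite list of reals; 0 on the empty list *)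
Definition seqmin (R : realDomainType) (s : seq R) : R :=
  match s with [::] => 0 | x :: t => foldr Num.min x t end.

Definition in_simplex (R : realDomainType) (L : nat) (w : 'cV[R]_L) : Prop :=
  (forall i, 0 <= w i 0) /\ \sum_i w i 0 = 1.

Definition is_pmf (R : realDomainType) (L K : nat) (V : finType)
  (P : 'I_L -> K.-tuple V -> R) : Prop :=
  (forall i t, 0 <= P i t) /\ \sum_i \sum_(t : K.-tuple V) P i t = 1.

Section Model.
Variables (R : realFieldType) (L K : nat) (V : finType).
Variable P : 'I_L -> K.-tuple V -> R.
Variable e : nat -> R.          (* e k = cost of evaluating feature F_k *)
Variable Q : 'M[R]_L.           (* Q i j = Q_ij, Q_j = col j Q *)

(* P(F_1 = h_1, ..., F_k = h_k, C = c_i), with k = size h *)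
Definition Phist (h : seq V) (i : 'I_L) : R :=
  \sum_(t : K.-tuple V | take (size h) t == h) P i t.

(* Delta(f | h) = [P(F_{k+1} = f | F_1..F_k = h, C = c_i)]_i  (x / 0 = 0) *)
Definition Delta (h : seq V) (f : V) : 'cV[R]_L :=
  \col_i (Phist (rcons h f) i / Phist h i).

Definition sc (a : 'rV[R]_L) (w : 'cV[R]_L) : R := (a *m w) 0 0.

Definition g (w : 'cV[R]_L) : R :=
  seqmin [seq sc (col j Q)^T w | j <- enum 'I_L].

Definition Aterm (h : seq V) (Jnext : seq V -> 'cV[R]_L -> R)
    (w : 'cV[R]_L) : R :=
  e (size h).+1 +
  \sum_(f : V)
    (if sc (Delta h f)^T w == 0 then 0
     else sc (Delta h f)^T w *
          Jnext (rcons h f)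
            ((sc (Delta h f)^T w)^-1 *: (diag_mx (Delta h f)^T *m w))).

(* Jrec m h = \bar J_{K-m} for the history h *)
Fixpoint Jrec (m : nat) (h : seq V) (w : 'cV[R]_L) : R :=
  match m with
  | 0 => g w
  | m'.+1 => Num.min (g w) (Aterm h (Jrec m') w)
  end.

Definition Jbar (k : nat) (h : seq V) (w : 'cV[R]_L) : R := Jrec (K - k) h w.

End Model.

(* Main.v *)
Require Import Defs.
From HB Require Import structures.
From mathcomp Require Import all_boot all_order all_algebra.
Import Order.TTheory GRing.Theory Num.Theory.
Local Open Scope ring_scope.

Section S.
Variable R : realFieldType.

Lemma seqmin_le (s : seq R) x : x \in s -> seqmin s <= x.
Proof.
case: s => [//|y t] /=.
elim: t x => [|z t IH] x /=; first by rewrite inE => /eqP ->.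
rewrite !inE => /orP [/eqP ->|/orP [/eqP ->|H]].
- by rewrite ge_min IH ?orbT // inE eqxx.
- by rewrite ge_min lexx.
- by rewrite ge_min IH ?orbT // inE H orbT.
Qed.

Lemma seqmin_mem (s : seq R) : s != [::] -> seqmin s \in s.
Proof.
case: s => [//|y t] _ /=.
elim: t => [|z t IH] /=; first by rewrite inE.
rewrite /Num.min; case: ifP => _; rewrite !inE ?eqxx ?orbT //.
move: IH; rewrite inE => /orP [->//|H]; by rewrite H !orbT.
Qed.

Lemma seqmin_eq (s : seq R) m : m \in s -> (forall x, x \in s -> m <= x) -> seqmin s = m.
Proof.
move=> Hm Hle; apply/le_anti; rewrite seqmin_le //=.
by apply: Hle; apply: seqmin_mem; case: s Hm.
Qed.
End S.

Section M.
Variables (R : realFieldType) (L : nat).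

Lemma mapn0 (T U : eqType) (f : T -> U) (s : seq T) : s != [::] -> map f s != [::].
Proof. by case: s. Qed.

Definition rep (F : 'cV[R]_L -> R) :=
  exists2 A : seq 'rV[R]_L, A != [::] &
    forall w, in_simplex w -> F w = seqmin [seq sc a w | a <- A].

Lemma rep_ext F G : (forall w, F w = G w) -> rep F -> rep G.
Proof. by move=> E [A nA HA]; exists A => // w Hw; rewrite -E HA. Qed.

Lemma scE (a : 'rV[R]_L) w : sc a w = \sum_j a 0 j * w j 0.
Proof. by rewrite /sc mxE. Qed.

Lemma scD (a b : 'rV[R]_L) w : sc (a + b) w = sc a w + sc b w.
Proof. by rewrite /sc mulmxDl mxE. Qed.

Lemma rep_min F1 F2 : rep F1 -> rep F2 -> rep (fun w => Num.min (F1 w) (F2 w)).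
Proof.
move=> [A nA HA] [B nB HB]; exists (A ++ B); first by move: nA; clear; case: A.
move=> w Hw; rewrite HA // HB //; apply/esym/seqmin_eq.
- rewrite map_cat mem_cat /Num.min; case: ifP => _.
  + by rewrite seqmin_mem // mapn0.
  + by rewrite (@seqmin_mem _ [seq sc a w | a <- B]) ?orbT // mapn0.
- move=> x; rewrite map_cat mem_cat => /orP [H|H]; rewrite ge_min; apply/orP; [left|right]; exact: seqmin_le.
Qed.

Lemma rep_add F1 F2 : rep F1 -> rep F2 -> rep (fun w => F1 w + F2 w).
Proof.
move=> [A nA HA] [B nB HB]; exists [seq a + b | a <- A, b <- B].
  by move: nA nB; clear; case: A => // a A _; case: B.
move=> w Hw; rewrite HA // HB //; apply/esym/seqmin_eq.
- have /mapP [a Ha ->] : seqmin [seq sc a w | a <- A] \in [seq sc a w | a <- A].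
    by apply: seqmin_mem; apply: mapn0.
  have /mapP [b Hb ->] : seqmin [seq sc a w | a <- B] \in [seq sc a w | a <- B].
    by apply: seqmin_mem; apply: mapn0.
  by rewrite -scD; apply: map_f; apply: allpairs_f.
- move=> x /mapP [c /allpairsP [[a b] /= [Ha Hb ->]] ->].
  by rewrite scD; apply: lerD; apply: seqmin_le; apply: map_f.
Qed.

Lemma rep_const c : rep (fun _ => c).
Proof.
exists [:: const_mx c] => // w [_ Hs] /=.
by rewrite scE -[LHS]mulr1 -Hs mulr_sumr; apply: eq_bigr => i _; rewrite mxE.
Qed.

Lemma rep_sum (I : Type) (r : seq I) (T : I -> 'cV[R]_L -> R) :
  (forall i, rep (T i)) -> rep (fun w => \sum_(i <- r) T i w).
Proof.
move=> HT; elim: r => [|i r IH].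
  apply: (@rep_ext (fun _ => 0)); last exact: rep_const.
  by move=> w; rewrite big_nil.
have := rep_add _ _ (HT i) IH; apply: rep_ext => w.
by rewrite big_cons.
Qed.

Lemma rep_persp (D : 'cV[R]_L) (F : 'cV[R]_L -> R) :
  (forall i, 0 <= D i 0) -> rep F ->
  rep (fun w => if sc D^T w == 0 then 0
                else sc D^T w * F ((sc D^T w)^-1 *: (diag_mx D^T *m w))).
Proof.
move=> D0 [B nB HB]; exists [seq b *m diag_mx D^T | b <- B].
  by apply: mapn0.
move=> w [w0 w1].
have Ec : sc D^T w = \sum_i D i 0 * w i 0.
  by rewrite scE; apply: eq_bigr => i _; rewrite mxE.
have Edw : forall i, (diag_mx D^T *m w) i 0 = D i 0 * w i 0.
  by move=> i; rewrite mul_diag_mx !mxE.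
have Es : forall b : 'rV_L, sc (b *m diag_mx D^T) w = sc b (diag_mx D^T *m w).
  by move=> b; rewrite /sc mulmxA.
case: eqP => Hc.
- have Z : diag_mx D^T *m w = 0.
    apply/matrixP => i j; rewrite (ord1 j) Edw mxE.
    move: Hc; rewrite Ec => /psumr_eq0P H; apply: H => // k _.
    by rewrite mulr_ge0.
  apply/esym/seqmin_eq.
  + move: nB; clear HB; case: B => // b B' _; rewrite /= inE Es Z /sc mulmx0 mxE eqxx //.
  + move=> x /mapP [c /mapP [b _ ->] ->]; by rewrite Es Z /sc mulmx0 mxE.
- set c := sc D^T w.
  have c0 : 0 < c.
    rewrite lt_def; apply/andP; split; first by apply/eqP.
    by rewrite /c Ec sumr_ge0 // => i _; rewrite mulr_ge0.
  rewrite HB; last first.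
    split.
    + move=> i; rewrite mxE Edw; apply: mulr_ge0; [by rewrite invr_ge0 ltW | exact: mulr_ge0].
    + under eq_bigr => i _ do rewrite mxE Edw.
      by rewrite -mulr_sumr -Ec mulVf //; apply/eqP.
  apply/esym/seqmin_eq.
  + have /mapP [b Hb ->] : seqmin [seq sc a ((c^-1) *: (diag_mx D^T *m w)) | a <- B]
        \in [seq sc a ((c^-1) *: (diag_mx D^T *m w)) | a <- B].
      by apply: seqmin_mem; apply: mapn0.
    apply/mapP; exists (b *m diag_mx D^T); first by apply: map_f.
    rewrite Es /sc -scalemxAr mxE mulrA mulfV ?mul1r //; by apply/eqP.
  + move=> x /mapP [y /mapP [b Hb ->] ->].
    have -> : sc (b *m diag_mx D^T) w = c * sc b ((c^-1) *: (diag_mx D^T *m w)).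
      apply/esym; rewrite Es /sc -scalemxAr mxE mulrA mulfV ?mul1r //; by apply/eqP.
    by apply: ler_wpM2l; [exact: ltW | apply: seqmin_le; apply: map_f].
Qed.
End M.
Arguments rep {R L}.

Lemma rep_Jrec (R : realFieldType) (L K : nat) (V : finType)
  (P : 'I_L -> K.-tuple V -> R) (e : nat -> R) (Q : 'M[R]_L) :
  (0 < L)%N -> (forall i t, 0 <= P i t) ->
  forall m h, rep (Jrec P e Q m h).
Proof.
move=> L0 P0.
have rg : rep (g Q).
  exists [seq (col j Q)^T | j <- enum 'I_L].
    by apply: mapn0; rewrite -size_eq0 size_enum_ord -lt0n.
  by move=> w _; rewrite /g -map_comp.
elim=> [|m IH] h //=.
apply: rep_min => //.
apply: rep_add; first exact: rep_const.
apply: rep_sum => f; apply: rep_persp => // i.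
rewrite mxE; apply: divr_ge0; apply: sumr_ge0 => t _; exact: P0.
Qed.

Theorem theorem2 (R : realFieldType) (L K : nat) (V : finType)
  (P : 'I_L -> K.-tuple V -> R) (e : nat -> R) (Q : 'M[R]_L) :
  (0 < L)%N ->
  is_pmf P ->
  (forall k, (1 <= k <= K)%N -> 0 < e k) ->
  (forall i j, 0 <= Q i j) ->
  forall (k : nat) (h : seq V), (k <= K)%N -> size h = k ->
  exists alphas : seq 'rV[R]_L,
    alphas != [::] /\
    (k = K -> alphas = [seq (col j Q)^T | j <- enum 'I_L]) /\
    forall w : 'cV[R]_L, in_simplex w ->
      Jbar P e Q k h w = seqmin [seq sc alpha w | alpha <- alphas].
Proof.
move=> L0 [P0 _] _ _ k h kK _.
case: (eqVneq k K) => [EkK|nkK].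
  exists [seq (col j Q)^T | j <- enum 'I_L]; split.
    by apply: mapn0; rewrite -size_eq0 size_enum_ord -lt0n.
  split=> // w _; by rewrite /Jbar EkK subnn /= /g -map_comp.
have [A nA HA] := @rep_Jrec R L K V P e Q L0 P0 (K - k) h.
exists A; split=> //; split=> // EkK; by rewrite EkK eqxx in nkK.
Qed.
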